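(* Let $K$ be a field, $\alpha$ an ordinal and $0<n<\omega$. Then the $K$-algebra $B_{\alpha,n}$ has a conormed strong multiplicative basis.
   Context: For a sequence $\mathcal R=(R_i\mid i\in A)$ of $K$-algebras indexed by an infinite set $A$, $R(A,K,\mathcal R)$ is the $K$-subalgebra $\bigoplus_{i\in A}R_i\oplus1_P\cdot K$ of $P=\prod_{i\in A}R_i$; $\boxplus$ is ring direct product. Define $B_{0,1}=K$; $B_{\beta+1,1}=R(\aleph_0,K,\mathcal R)$ with $\mathcal R$ the constant sequence $R_m=B_{\beta,1}$ ($m<\aleph_0$); for limit $\alpha$, $B_{\alpha,1}=R(\alpha,K,(B_{\beta,1}\mid\beta<\alpha))$; $B_{\alpha,n}=B_{\alpha,1}\boxplus\cdots\boxplus B_{\alpha,1}$ ($n$ copies). Socle sequence: $S_0=0$, $S_{\alpha+1}/S_\alpha=\mathrm{Soc}(R/S_\alpha)$, unions at limits; Loewy length $\sigma+1$ means $S_{\sigma+1}=R\ne S_\sigma$. A $K$-basis $B$ is strong multiplicative if $bb'\in B$ for all $b,b'\in B$; it is conormed if it contains a $K$-basis of $S_\gamma$ for each $\gamma\le\sigma$. *)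

(* Defs.v *)
From mathcomp Require Import all_boot all_algebra.
Set Implicit Arguments. Unset Strict Implicit. Unset Printing Implicit Defensive.
Import GRing.Theory.
Local Open Scope ring_scope.

Definition is_wellorder (T : Type) (lt : T -> T -> Prop) : Prop :=
  [/\ well_founded lt, (forall x, ~ lt x x),
      (forall x y z, lt x y -> lt y z -> lt x z) &
      (forall x y, lt x y \/ x = y \/ lt y x)].

Section OrdKinds.
Variables (T : Type) (lt : T -> T -> Prop).
Definition is_zero (a : T) : Prop := forall v, ~ lt v a.
Definition is_pred (p a : T) : Prop := lt p a /\ (forall v, lt v a -> lt v p \/ v = p).
Definition is_limit (a : T) : Prop := ~ is_zero a /\ (forall p, ~ is_pred p a).
End OrdKinds.

(** B_{a,1} is realised concretely as a K-subalgebra of the algebra of all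
  functions (pointwise operations) from "paths" [seq (T + nat)] to K:
  the path [::] is the unique point for a = 0; a point of
  B_{p+1,1} = R(aleph_0, K, (B_{p,1})_m) is (inr m :: s) with s a point of B_{p,1};
  a point of B_{a,1} = R(a, K, (B_{b,1})_{b<a}) (a limit) is (inl b :: s) with
  b < a and s a point of B_{b,1}. The product prod_i R_i is thus the
  algebra of functions on the disjoint union of the point sets. *)

Definition label (T : Type) := (T + nat)%type.

Fixpoint inList (T : Type) (x : T) (l : seq T) : Prop :=
  if l is y :: l' then y = x \/ inList x l' else False.

Section Balg.
Variables (T : Type) (lt : T -> T -> Prop) (K : fieldType).

Inductive valid : T -> seq (label T) -> Prop :=
| valid_zero a : is_zero lt a -> valid a [::]
| valid_succ a p m s : is_pred lt p a -> valid p s -> valid a (inr m :: s)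
| valid_lim a b s : is_limit lt a -> lt b a -> valid b s -> valid a (inl b :: s).

Definition isConst (a : T) (c : K) (g : seq (label T) -> K) : Prop :=
  forall s, (valid a s -> g s = c) /\ (~ valid a s -> g s = 0).

Inductive inB : T -> (seq (label T) -> K) -> Prop :=
| inB_zero a f : is_zero lt a -> (forall s, s <> [::] -> f s = 0) -> inB a f
| inB_succ a p f (c : K) (N : nat) :
    is_pred lt p a -> f [::] = 0 -> (forall b s, f (inl b :: s) = 0) ->
    (forall m, inB p (fun s => f (inr m :: s))) ->
    (forall m, (N <= m)%N -> isConst p c (fun s => f (inr m :: s))) ->
    inB a f
| inB_lim a f (c : K) (l : seq T) :
    is_limit lt a -> f [::] = 0 -> (forall m s, f (inr m :: s) = 0) ->
    (forall b s, ~ lt b a -> f (inl b :: s) = 0) ->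
    (forall b, lt b a -> inB b (fun s => f (inl b :: s))) ->
    (forall b, lt b a -> ~ inList b l -> isConst b c (fun s => f (inl b :: s))) ->
    inB a f.

Definition Bn (a : T) (n : nat) (f : 'I_n * seq (label T) -> K) : Prop :=
  forall i : 'I_n, inB a (fun s => f (i, s)).

End Balg.

Section AlgNotions.
Variables (K : fieldType) (Y : Type).
Notation fn := (Y -> K).
Notation fset := (fn -> Prop).

Definition subset_f (P Q : fset) : Prop := forall x, P x -> Q x.

Definition lin_indep (B : fset) : Prop :=
  forall (n : nat) (v : 'I_n -> fn) (c : 'I_n -> K),
    injective v -> (forall i, B (v i)) ->
    (forall t, \sum_(i < n) c i * v i t = 0) -> forall i, c i = 0.

Definition spans (B A : fset) : Prop :=
  forall x, A x -> exists (n : nat) (v : 'I_n -> fn) (c : 'I_n -> K),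
    (forall i, B (v i)) /\ (forall t, x t = \sum_(i < n) c i * v i t).

Definition is_basis (A B : fset) : Prop :=
  [/\ subset_f B A, lin_indep B & spans B A].

Definition strong_mult (B : fset) : Prop :=
  forall b b', B b -> B b' -> B (fun t => b t * b' t).

Definition ideal (A I : fset) : Prop :=
  [/\ subset_f I A, I (fun _ => 0),
      (forall x y, I x -> I y -> I (fun t => x t - y t)) &
      (forall r x, A r -> I x -> I (fun t => r t * x t))].

(* J/S is a minimal (nonzero) ideal of A/S, via the correspondence theorem *)
Definition minimal_over (A S J : fset) : Prop :=
  [/\ ideal A J, subset_f S J, (exists x, J x /\ ~ S x) &
      (forall J', ideal A J' -> subset_f S J' -> subset_f J' J ->
         subset_f J' S \/ subset_f J J')].

(* preimage in A of Soc(A/S): S + sum of the ideals J with J/S minimal in A/S *)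
Definition soc_next (A S : fset) : fset := fun x =>
  A x /\ exists (n : nat) (J : 'I_n -> fset) (y : 'I_n -> fn) (s : fn),
    [/\ S s, (forall i, minimal_over A S (J i) /\ J i (y i)) &
        (forall t, x t = s t + \sum_(i < n) y i t)].

Definition socle_seq (A : fset) (W : Type) (ltW : W -> W -> Prop) (S : W -> fset) : Prop :=
  forall w x,
    [/\ (is_zero ltW w -> (S w x <-> forall t, x t = 0)),
        (forall p, is_pred ltW p w -> (S w x <-> soc_next A (S p) x)) &
        (is_limit ltW w -> (S w x <-> exists v, ltW v w /\ S v x))].

Definition conormed (A B : fset) : Prop :=
  forall (W : Type) (ltW : W -> W -> Prop), is_wellorder ltW ->
  forall S : W -> fset, socle_seq A ltW S ->
  forall w : W, exists C : fset, subset_f C B /\ is_basis (S w) C.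

End AlgNotions.

(* Main.v *)
Require Import Defs.
From mathcomp Require Import all_boot all_algebra.
From Stdlib Require Import Classical ClassicalEpsilon FunctionalExtensionality PropExtensionality.
From mathcomp Require Import zify.
Set Warnings "-all".
Set Implicit Arguments. Unset Strict Implicit. Unset Printing Implicit Defensive.
Import GRing.Theory.
Local Open Scope ring_scope.

Section WO.
Variables (X : Type) (ltX : X -> X -> Prop).
Hypothesis wo : is_wellorder ltX.

Definition leX x y := ltX x y \/ x = y.

Lemma wo_wf : well_founded ltX. Proof. by case: wo. Qed.
Lemma wo_irr x : ~ ltX x x. Proof. by case: wo. Qed.
Lemma wo_tr x y z : ltX x y -> ltX y z -> ltX x z.
Proof. case: wo => _ _ H _; exact: H. Qed.
Lemma wo_tri x y : ltX x y \/ x = y \/ ltX y x. Proof. by case: wo. Qed.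

Lemma wo_asym x y : ltX x y -> ltX y x -> False.
Proof. move=> h1 h2; exact: (wo_irr (wo_tr h1 h2)). Qed.

Lemma le_lt_tr x y z : leX x y -> ltX y z -> ltX x z.
Proof. by case=> [h|->] //; apply: wo_tr. Qed.
Lemma lt_le_tr x y z : ltX x y -> leX y z -> ltX x z.
Proof. by move=> h [h'|<-] //; apply: wo_tr h h'. Qed.
Lemma le_tr x y z : leX x y -> leX y z -> leX x z.
Proof. move=> [h|->] // h'; left; exact: lt_le_tr h h'. Qed.
Lemma not_lt_le x y : ~ ltX x y -> leX y x.
Proof. move=> h; case: (wo_tri x y) => [//|[->|h']]; [right|left]. by []. by []. Qed.
Lemma le_not_lt x y : leX x y -> ~ ltX y x.
Proof. move=> [h|->] h'; [exact: wo_asym h h'|exact: wo_irr h']. Qed.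

Lemma classify a : is_zero ltX a \/ (exists p, is_pred ltX p a) \/ is_limit ltX a.
Proof.
case: (classic (is_zero ltX a)) => hz; first by left.
case: (classic (exists p, is_pred ltX p a)) => hp; first by right; left.
right; right; split => // p hp'; apply: hp; by exists p.
Qed.

Lemma zero_not_pred a p : is_zero ltX a -> is_pred ltX p a -> False.
Proof. move=> hz [h _]; exact: hz h. Qed.
Lemma limit_not_pred a p : is_limit ltX a -> is_pred ltX p a -> False.
Proof. move=> [_ h] hp; exact: h hp. Qed.
Lemma limit_not_zero a : is_limit ltX a -> is_zero ltX a -> False.
Proof. by move=> [h _]. Qed.

Lemma pred_uniq p q a : is_pred ltX p a -> is_pred ltX q a -> p = q.
Proof.
move=> [hp Hp] [hq Hq].
case: (Hp _ hq) => [h1|//]; case: (Hq _ hp) => [h2|//].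
by case: (wo_asym h1 h2).
Qed.

Lemma nonzero_ex a : ~ is_zero ltX a -> exists v, ltX v a.
Proof. move=> h; apply: NNPP => h'; apply: h => v hv; apply: h'; by exists v. Qed.

Lemma limit_between a x : is_limit ltX a -> ltX x a -> exists y, ltX x y /\ ltX y a.
Proof.
move=> hl hx; apply: NNPP => hn.
apply: (limit_not_pred hl (p:=x)); split => // v hv.
case: (wo_tri v x) => [h|[->|h]]; [by left|by right|].
by case: hn; exists v.
Qed.

Lemma limit_avoid a l x : is_limit ltX a -> ltX x a ->
  exists b, leX x b /\ ltX b a /\ ~ inList b l.
Proof.
move=> hl; elim: l x => [|y l IH] x hx.
  by exists x; split; [right|split].
case: (classic (ltX y a /\ leX x y)) => [[hya hxy]|hn].
  have [y' [hyy' hy'a]] := limit_between hl hya.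
  have [b [hb1 [hb2 hb3]]] := IH _ hy'a.
  exists b; split; first by left; apply: le_lt_tr hxy (lt_le_tr hyy' hb1).
  split => //= -[hyb|//].
  subst y; exact: (le_not_lt hb1 hyy').
have [b [hb1 [hb2 hb3]]] := IH _ hx.
exists b; split => //; split => //= -[hyb|//]; subst y.
apply: hn; split => //.
Qed.

Lemma le_refl x : leX x x. Proof. by right. Qed.

Lemma leX_total x y : leX x y \/ leX y x.
Proof. case: (wo_tri x y) => [h|[->|h]]; [left;left|left;right|right;left] => //. Qed.

End WO.

Definition pre (A : Type) (s t : seq A) := exists w, t = s ++ w.

Lemma pre_refl A (s : seq A) : pre s s. Proof. by exists [::]; rewrite cats0. Qed.
Lemma pre_nil A (s : seq A) : pre [::] s. Proof. by exists s. Qed.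
Lemma pre_cons A (x : A) s y t : pre (x :: s) (y :: t) <-> x = y /\ pre s t.
Proof.
split; first by case=> w /= [-> ->]; split => //; exists w.
by case=> -> [w ->]; exists w.
Qed.
Lemma pre_cons_nil A (x : A) s : ~ pre (x :: s) [::]. Proof. by case. Qed.
Lemma pre_cat A (u s t : seq A) : pre (u ++ s) (u ++ t) <-> pre s t.
Proof.
elim: u => [//|x u IH] /=; rewrite pre_cons IH; tauto.
Qed.
Lemma pre_catr A (u s : seq A) : pre u (u ++ s). Proof. by exists s. Qed.
Lemma pre_trans A (s t u : seq A) : pre s t -> pre t u -> pre s u.
Proof. by case=> w -> [w' ->]; exists (w ++ w'); rewrite catA. Qed.
Lemma pre_comp A (s u t : seq A) : pre s t -> pre u t -> pre s u \/ pre u s.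
Proof.
elim: s u t => [|x s IH] u t; first by left; apply: pre_nil.
case: u => [|y u]; first by right; apply: pre_nil.
case: t => [|z t]; first by move=> [w].
move=> /pre_cons [e1 h1] /pre_cons [e2 h2]; subst x y.
by case: (IH _ _ h1 h2) => h; [left|right]; apply/pre_cons.
Qed.
Lemma pre_size A (s t : seq A) : pre s t -> (size s <= size t)%N.
Proof. by case=> w ->; rewrite size_cat leq_addr. Qed.
Lemma pre_antisym A (s t : seq A) : pre s t -> pre t s -> s = t.
Proof.
move=> [w hw] [w' hw']; rewrite hw in hw'.
have /(congr1 size) := hw'; rewrite !size_cat => h.
have : size w = 0%N by lia.
by move/eqP/nilP => e; rewrite hw e cats0.
Qed.

Lemma inList_cat A (x : A) l1 l2 : inList x (l1 ++ l2) <-> inList x l1 \/ inList x l2.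
Proof. elim: l1 => [|y l IH] /=; first by split; [right|case]. rewrite IH; tauto. Qed.

Section Ind.
Variable K : fieldType.
Definition ind (P : Prop) : K := if excluded_middle_informative P then 1 else 0.
Lemma ind_T (P : Prop) : P -> ind P = 1.
Proof. by rewrite /ind; case: excluded_middle_informative. Qed.
Lemma ind_F (P : Prop) : ~ P -> ind P = 0.
Proof. by rewrite /ind; case: excluded_middle_informative. Qed.
Lemma ind_iff (P Q : Prop) : (P <-> Q) -> ind P = ind Q.
Proof. move=> h; case: (classic P) => hp; first by rewrite !ind_T //; tauto. by rewrite !ind_F //; tauto. Qed.
Lemma ind_and (P Q : Prop) : ind (P /\ Q) = ind P * ind Q.
Proof.
case: (classic P) => hp; case: (classic Q) => hq.
- by rewrite !ind_T ?mulr1.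
- by rewrite (ind_F hq) (ind_F (P := P /\ Q)) ?mulr0 //; case.
- by rewrite (ind_F hp) (ind_F (P := P /\ Q)) ?mul0r //; case.
- by rewrite (ind_F hp) (ind_F (P := P /\ Q)) ?mul0r //; case.
Qed.
Lemma ind_idem (P : Prop) : ind P * ind P = ind P.
Proof. by rewrite -ind_and; apply: ind_iff; tauto. Qed.

Definition pick (P : K -> Prop) : K :=
  match excluded_middle_informative (exists c, P c) with
  | left h => proj1_sig (constructive_indefinite_description P h)
  | right _ => 0 end.
Lemma pick_spec (P : K -> Prop) : (exists c, P c) -> P (pick P).
Proof.
move=> h; rewrite /pick; case: excluded_middle_informative => [h'|//].
exact: proj2_sig (constructive_indefinite_description P h').
Qed.
End Ind.

Lemma inList_map_inl (T : Type) (b : T) (l : seq T) :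
  inList (@inl T nat b) (map inl l) <-> inList b l.
Proof. elim: l => [//|y l IH] /=; rewrite IH; split; case => h; try tauto; left; [by case: h|by rewrite h]. Qed.

Lemma inList_iota (T : Type) k N m : (k <= m < k + N)%N -> inList (@inr T nat m) (map inr (iota k N)).
Proof.
elim: N k => [|N IH] k; first by rewrite addn0; case/andP => h1 h2; move: (leq_ltn_trans h1 h2); rewrite ltnn.
move=> /andP [h1 h2] /=; case: (ltngtP k m) => h.
- right; apply: IH; apply/andP; split => //; by rewrite addSnnS.
- by move: (leq_ltn_trans h1 h); rewrite ltnn.
- by left; rewrite h.
Qed.

Section Main.
Variables (T : Type) (lt : T -> T -> Prop).
Hypothesis wo : is_wellorder lt.
Notation label := (label T).
Notation le := (leX lt).

Inductive lev : T -> seq label -> T -> Prop :=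
| lev_nil a : lev a [::] a
| lev_succ a p m s b : is_pred lt p a -> lev p s b -> lev a (inr m :: s) b
| lev_lim a c s b : is_limit lt a -> lt c a -> lev c s b -> lev a (inl c :: s) b.

Lemma lev_nil_inv a b : lev a [::] b -> a = b.
Proof. by move=> h; inversion h. Qed.

Lemma lev_inr_inv a m s b : lev a (inr m :: s) b -> exists p, is_pred lt p a /\ lev p s b.
Proof. move=> h; inversion h; subst; by exists p. Qed.
Lemma lev_inl_inv a c s b : lev a (inl c :: s) b -> [/\ is_limit lt a, lt c a & lev c s b].
Proof. move=> h; by inversion h; subst. Qed.

Lemma lev_det a s b b' : lev a s b -> lev a s b' -> b = b'.
Proof.
move=> h; elim: h b' => [a0|a0 p m s0 b0 hp _ IH|a0 c s0 b0 hl hc _ IH] b'.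
- by move/lev_nil_inv.
- case/lev_inr_inv => p' [hp' h']; apply: IH; by rewrite (pred_uniq wo hp hp').
- by case/lev_inl_inv => _ _ /IH.
Qed.

Lemma lev_cat a s t c : lev a (s ++ t) c <-> exists b, lev a s b /\ lev b t c.
Proof.
elim: s a => [|x s IH] a /=.
  split; first by move=> h; exists a; split => //; constructor.
  by case=> b [/lev_nil_inv -> h].
case: x => [c0|m]; split.
- case/lev_inl_inv => hl hc /IH [b [h1 h2]]; exists b; split => //; exact: lev_lim.
- case=> b [/lev_inl_inv [hl hc h1] h2]; apply: lev_lim => //; apply/IH; by exists b.
- case/lev_inr_inv => p [hp /IH [b [h1 h2]]]; exists b; split => //; exact: lev_succ hp h1.
- case=> b [/lev_inr_inv [p [hp h1]] h2]; apply: lev_succ hp _; apply/IH; by exists b.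
Qed.

Lemma lev_snoc a s x c : lev a (rcons s x) c <-> exists b, lev a s b /\ lev b [:: x] c.
Proof. by rewrite -cats1 lev_cat. Qed.

Lemma lev_le a s b : lev a s b -> le b a.
Proof.
elim=> [a0|a0 p m s0 b0 [hp _] _ IH|a0 c s0 b0 hl hc _ IH]; first by right.
- left; exact (le_lt_tr wo IH hp).
- left; exact (le_lt_tr wo IH hc).
Qed.

Lemma lev_lt a x s b : lev a (x :: s) b -> lt b a.
Proof.
case: x => [c|m].
- case/lev_inl_inv => _ hc /lev_le h; exact (le_lt_tr wo h hc).
- case/lev_inr_inv => p [[hp _] /lev_le h]; exact (le_lt_tr wo h hp).
Qed.

Lemma lev_zero_nil a s b : is_zero lt a -> lev a s b -> s = [::].
Proof. by case: s => [//|x s] hz /lev_lt /hz. Qed.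

Lemma valid_lev a s : valid lt a s <-> exists z, lev a s z /\ is_zero lt z.
Proof.
split.
  elim=> [a0 hz|a0 p m s0 hp _ [z [h hz]]|a0 b s0 hl hb _ [z [h hz]]].
  - by exists a0; split => //; constructor.
  - exists z; split => //; exact: lev_succ hp h.
  - exists z; split => //; exact: lev_lim hl hb h.
case=> z [h hz]; elim: h hz => [a0|a0 p m s0 b0 hp _ IH|a0 c s0 b0 hl hc _ IH] hz.
- by constructor.
- apply: valid_succ hp (IH hz).
- apply: valid_lim hl hc (IH hz).
Qed.

Lemma valid_cat a s t : valid lt a (s ++ t) <-> exists b, lev a s b /\ valid lt b t.
Proof.
rewrite valid_lev; split.
  case=> z [/lev_cat [b [h1 h2]] hz]; exists b; split => //; apply/valid_lev; by exists z.
case=> b [h1 /valid_lev [z [h2 hz]]]; exists z; split => //; apply/lev_cat; by exists b.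
Qed.

Lemma valid_cons a x t : valid lt a (x :: t) <-> exists b, lev a [:: x] b /\ valid lt b t.
Proof. exact: (valid_cat a [:: x] t). Qed.

Lemma valid_nil a : valid lt a [::] <-> is_zero lt a.
Proof.
rewrite valid_lev; split; first by case=> z [/lev_nil_inv ->].
by move=> h; exists a; split => //; constructor.
Qed.

Lemma valid_ex a : exists s, valid lt a s.
Proof.
elim: a / (wo_wf wo) => a _ IH.
case: (classify lt a) => [hz|[[p hp]|hl]].
- by exists [::]; constructor.
- have [s hs] := IH p (proj1 hp); exists (inr 0%N :: s); exact: valid_succ hp hs.
- have [v hv] := nonzero_ex (proj1 hl).
  have [s hs] := IH v hv; exists (inl v :: s); exact: valid_lim hl hv hs.
Qed.

Lemma valid_pre a s t : valid lt a s -> valid lt a t -> pre s t -> s = t.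
Proof.
move=> /valid_lev [z [h hz]] /valid_lev [z' [h' hz']] [w ew]; subst t.
move/lev_cat: h' => [b [hb hw]]; rewrite (lev_det hb h) in hw.
by rewrite (lev_zero_nil hz hw) cats0.
Qed.

Fixpoint natsum (H : seq label) : nat :=
  if H is x :: H' then (match x with inr m => m | inl _ => 0 end + natsum H')%N else 0%N.
Fixpoint lbls (H : seq label) : seq T :=
  if H is x :: H' then (match x with inl b => b :: lbls H' | inr _ => lbls H' end) else [::].

Lemma natsum_ge m H : inList (inr m) H -> (m <= natsum H)%N.
Proof.
elim: H => [//|x H IH] /= [->|h]; first by rewrite leq_addr.
by apply: leq_trans (IH h) _; rewrite leq_addl.
Qed.
Lemma lbls_in b H : inList (inl b) H -> inList b (lbls H).
Proof.
elim: H => [//|[c|m] H IH] /= [h|h].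
- by left; case: h.
- by right; apply: IH.
- by [].
- exact: IH.
Qed.

Lemma fresh_child a (H : seq label) : ~ is_zero lt a ->
  exists x b, lev a [:: x] b /\ ~ inList x H /\ (exists t, valid lt b t).
Proof.
move=> hz; case: (classify lt a) => [//|[[p hp]|hl]].
- exists (inr (natsum H).+1), p; split; first by apply: lev_succ hp _; constructor.
  split; last exact: valid_ex.
  by move/natsum_ge; rewrite ltnn.
- have [v hv] := nonzero_ex (proj1 hl).
  have [b [_ [hb hn]]] := limit_avoid wo (lbls H) hl hv.
  exists (inl b), b; split; first by apply: lev_lim hl hb _; constructor.
  split; last exact: valid_ex.
  by move/lbls_in.
Qed.

Definition head0 (u : seq label) : label := if u is x :: _ then x else inr 0%N.

Lemma avoid_paths a (L : seq (seq label)) :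
  exists t, valid lt a t /\ forall u, inList u L -> u <> [::] -> ~ pre u t.
Proof.
case: (classic (is_zero lt a)) => hz.
  by exists [::]; split; [constructor|move=> u _ hu [w]; case: u hu].
have [x [b [hx [hH [t ht]]]]] := fresh_child (map head0 L) hz.
exists (x :: t); split; first by apply/valid_cons; exists b.
move=> [|y u] hu hne //.
move=> hp; have [ey _] := proj1 (pre_cons _ _ _ _) hp; subst y.
apply: hH; elim: L hu {hx} => [//|v L IH] /= [ev|h]; [by left; rewrite ev|right; exact: IH].
Qed.

Variable (K : fieldType).
Notation fn := (seq label -> K).
Notation inB := (@inB T lt K).
Notation isConst := (@isConst T lt K).
Notation valid := (valid lt).

Definition one a : fn := fun s => ind K (valid a s).

Definition nzdata a (f : fn) c (H : seq label) :=
  [/\ f [::] = 0, (forall x t, ~ (exists b, lev a [:: x] b) -> f (x :: t) = 0),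
      (forall x b, lev a [:: x] b -> inB b (fun t => f (x :: t))) &
      (forall x b, lev a [:: x] b -> ~ inList x H -> isConst b c (fun t => f (x :: t)))].

Lemma inB_zero_inv a f : inB a f -> is_zero lt a -> forall s, s <> [::] -> f s = 0.
Proof.
case=> [a0 f0 _ h //|a0 p f0 c N hp _ _ _ _ hz|a0 f0 c l hl _ _ _ _ _ hz].
- by case: (zero_not_pred hz hp).
- by case: (limit_not_zero hl hz).
Qed.

Lemma inB_nz_inv a f : inB a f -> ~ is_zero lt a -> exists c H, nzdata a f c H.
Proof.
case=> [a0 f0 hz _ //|a0 p f0 c N hp h0 hl hch hc|a0 f0 c l hl h0 hr hout hch hc] hz.
- exists c, (map inr (iota 0 N)); split => //.
  + move=> [b|m] t hn; first by rewrite hl.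
    by case: hn; exists p; apply: lev_succ hp _; constructor.
  + move=> [b|m] b0; first by case/lev_inl_inv => hl' _ _; case: (limit_not_pred hl' hp).
    case/lev_inr_inv => p' [hp' /lev_nil_inv <-]; rewrite (pred_uniq wo hp' hp); exact: hch.
  + move=> [b|m] b0; first by case/lev_inl_inv => hl' _ _; case: (limit_not_pred hl' hp).
    case/lev_inr_inv => p' [hp' /lev_nil_inv <-]; rewrite (pred_uniq wo hp' hp) => hn.
    apply: hc; rewrite leqNgt; apply/negP => hm; apply: hn; apply: inList_iota.
    by rewrite add0n hm.
- exists c, (map inl l); split => //.
  + move=> [b|m] t hn; last by rewrite hr.
    case: (classic (lt b a0)) => hb; last by rewrite hout.
    by case: hn; exists b; apply: lev_lim hl hb _; constructor.
  + move=> [b|m] b0; last by case/lev_inr_inv => p [hp _]; case: (limit_not_pred hl hp).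
    by case/lev_inl_inv => _ hb /lev_nil_inv <-; apply: hch.
  + move=> [b|m] b0; last by case/lev_inr_inv => p [hp _]; case: (limit_not_pred hl hp).
    case/lev_inl_inv => _ hb /lev_nil_inv <- hn; apply: hc => // hb'; apply: hn.
    by apply/inList_map_inl.
Qed.

Lemma inB_nz_intro a f c H : ~ is_zero lt a -> nzdata a f c H -> inB a f.
Proof.
move=> hz [h0 hout hch hc]; case: (classify lt a) => [//|[[p hp]|hl]].
- apply: (@inB_succ _ _ _ a p f c (natsum H).+1) => //.
  + move=> b s; apply: hout => -[b0 /lev_inl_inv [hl _ _]]; exact: limit_not_pred hl hp.
  + move=> m; apply: (hch (inr m)); apply: lev_succ hp _; constructor.
  + move=> m hm; apply: (hc (inr m)); first by apply: lev_succ hp _; constructor.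
    by move/natsum_ge => h; move: (leq_trans hm h); rewrite ltnn.
- apply: (@inB_lim _ _ _ a f c (lbls H)) => //.
  + move=> m s; apply: hout => -[b0 /lev_inr_inv [p [hp _]]]; exact: limit_not_pred hl hp.
  + move=> b s hb; apply: hout => -[b0 /lev_inl_inv [_ hb' _]] //.
  + move=> b hb; apply: (hch (inl b)); apply: lev_lim hl hb _; constructor.
  + move=> b hb hn; apply: (hc (inl b)); first by apply: lev_lim hl hb _; constructor.
    by move=> h; apply: hn; apply: lbls_in.
Qed.

Lemma inB_zero_intro a f : is_zero lt a -> (forall s, s <> [::] -> f s = 0) -> inB a f.
Proof. by move=> hz h; constructor. Qed.

Lemma inB_ext a f g : inB a f -> (forall s, f s = g s) -> inB a g.
Proof. by move=> h e; have -> : g = f by apply: functional_extensionality => s; rewrite e. Qed.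

Lemma isConst_ext a c f g : isConst a c f -> (forall s, f s = g s) -> isConst a c g.
Proof. by move=> h e s; rewrite -e; apply: h. Qed.

Lemma lev1_det a x b b' : lev a [:: x] b -> lev a [:: x] b' -> b = b'.
Proof. exact: lev_det. Qed.

Lemma valid_child a x b t : lev a [:: x] b -> (valid (a) (x :: t) <-> valid b t).
Proof.
move=> hx; rewrite valid_cons; split; first by case=> b' [h1 h2]; rewrite (lev1_det hx h1).
by move=> h; exists b.
Qed.

Lemma inB_one a : inB a (one a).
Proof.
elim: a / (wo_wf wo) => a _ IH.
case: (classic (is_zero lt a)) => hz.
  apply: inB_zero_intro => // s hs; rewrite /one ind_F // => /valid_lev [z [h _]].
  by apply: hs; apply: lev_zero_nil h.
apply: (@inB_nz_intro _ _ 1 [::] hz); split.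
- by rewrite /one ind_F // => /valid_nil.
- move=> x t hn; rewrite /one ind_F // => /valid_cons [b [h _]]; apply: hn; by exists b.
- move=> x b hx; apply: (inB_ext (IH b (lev_lt hx))) => t.
  by rewrite /one; apply: ind_iff; rewrite (valid_child _ hx).
- move=> x b hx _ t; rewrite /one (ind_iff _ (valid_child t hx)); split => h; [exact: ind_T|exact: ind_F].
Qed.

Lemma isConst_one a : isConst a 1 (one a).
Proof. move=> s; split => h; [exact: ind_T|exact: ind_F]. Qed.

Lemma isConst_bin (op : K -> K -> K) a c d f g : op 0 0 = 0 ->
  isConst a c f -> isConst a d g -> isConst a (op c d) (fun s => op (f s) (g s)).
Proof.
move=> h0 hf hg s; have [h1 h2] := hf s; have [h3 h4] := hg s.
by split => h; [rewrite h1 // h3|rewrite h2 // h4].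
Qed.

Lemma isConst_un (u : K -> K) a c f : u 0 = 0 ->
  isConst a c f -> isConst a (u c) (fun s => u (f s)).
Proof. by move=> h0 hf s; have [h1 h2] := hf s; split => h; [rewrite h1|rewrite h2]. Qed.

Lemma inB_bin (op : K -> K -> K) a f g : op 0 0 = 0 ->
  inB a f -> inB a g -> inB a (fun s => op (f s) (g s)).
Proof.
move=> h0; elim: a / (wo_wf wo) f g => a _ IH f g hf hg.
case: (classic (is_zero lt a)) => hz.
  apply: inB_zero_intro => // s hs.
  by rewrite (inB_zero_inv hf hz hs) (inB_zero_inv hg hz hs).
have [c [H [f0 fout fch fc]]] := inB_nz_inv hf hz.
have [d [H' [g0 gout gch gc]]] := inB_nz_inv hg hz.
apply: (@inB_nz_intro _ _ (op c d) (H ++ H') hz); split.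
- by rewrite f0 g0.
- by move=> x t hn; rewrite fout // gout.
- move=> x b hx; apply: (IH b (lev_lt hx)); [exact: fch hx|exact: gch hx].
- move=> x b hx hn; apply: isConst_bin => //.
  + by apply: fc hx _ => h; apply: hn; apply/inList_cat; left.
  + by apply: gc hx _ => h; apply: hn; apply/inList_cat; right.
Qed.

Lemma inB_un (u : K -> K) a f : u 0 = 0 -> inB a f -> inB a (fun s => u (f s)).
Proof.
move=> h0 hf; exact: (inB_bin (op := fun x y => u x) h0 hf hf).
Qed.

Lemma inB_0 a : inB a (fun _ => 0).
Proof. exact: (inB_un (u := fun _ => 0) (erefl _) (inB_one a)). Qed.

Lemma inB_restrict s a b f : inB a f -> lev a s b -> inB b (fun t => f (s ++ t)).
Proof.
elim: s a f => [|x s IH] a f hf; first by move/lev_nil_inv => <-.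
move/(lev_cat _ [:: x] s) => [b1 [h1 h2]].
have hz : ~ is_zero lt a by move=> hz; move: (lev_zero_nil hz h1).
have [c [H [_ _ fch _]]] := inB_nz_inv hf hz.
exact: (IH _ _ (fch _ _ h1) h2).
Qed.

Lemma inB_support a f s : inB a f -> ~ valid a s -> f s = 0.
Proof.
elim: s a f => [|x t IH] a f hf hv.
  have hz : ~ is_zero lt a by move=> hz; apply: hv; constructor.
  by have [c [H [f0 _ _ _]]] := inB_nz_inv hf hz.
case: (classic (is_zero lt a)) => hz; first by apply: (inB_zero_inv hf hz).
have [c [H [f0 fout fch _]]] := inB_nz_inv hf hz.
case: (classic (exists b, lev a [:: x] b)) => [[b hb]|hn]; last exact: fout.
apply: (IH b (fun t => f (x :: t)) (fch _ _ hb)) => h; apply: hv.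
by apply/(valid_child _ hb).
Qed.

Definition top a (g : fn) (c : K) :=
  (is_zero lt a -> g [::] = c) /\
  (~ is_zero lt a -> exists H, forall x b, lev a [:: x] b -> ~ inList x H ->
       isConst b c (fun t => g (x :: t))).

Lemma top_uniq a g c d : top a g c -> top a g d -> c = d.
Proof.
move=> [hz1 hn1] [hz2 hn2]; case: (classic (is_zero lt a)) => hz.
  by rewrite -(hz1 hz) (hz2 hz).
have [H1 h1] := hn1 hz; have [H2 h2] := hn2 hz.
have [x [b [hx [hH [t ht]]]]] := fresh_child (H1 ++ H2) hz.
have e1 := proj1 (h1 _ _ hx (fun h => hH (proj2 (inList_cat _ _ _) (or_introl h))) t) ht.
have e2 := proj1 (h2 _ _ hx (fun h => hH (proj2 (inList_cat _ _ _) (or_intror h))) t) ht.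
by rewrite -e1 -e2.
Qed.

Lemma top_ex a g : inB a g -> exists c, top a g c.
Proof.
move=> hg; case: (classic (is_zero lt a)) => hz.
  by exists (g [::]); split => // h.
have [c [H [_ _ _ hc]]] := inB_nz_inv hg hz.
by exists c; split => // _; exists H.
Qed.

Lemma isConst_top a c g : isConst a c g -> top a g c.
Proof.
move=> h; split.
  move=> hz; exact: (proj1 (h [::]) (valid_zero hz)).
move=> hz; exists [::] => x b hx _ t; have [h1 h2] := h (x :: t).
by rewrite !(valid_child _ hx) in h1 h2.
Qed.

Lemma top_bin (op : K -> K -> K) a f g c d : op 0 0 = 0 ->
  top a f c -> top a g d -> top a (fun s => op (f s) (g s)) (op c d).
Proof.
move=> h0 [hz1 hn1] [hz2 hn2]; split; first by move=> hz; rewrite hz1 // hz2.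
move=> hz; have [H1 h1] := hn1 hz; have [H2 h2] := hn2 hz.
exists (H1 ++ H2) => x b hx hn; apply: isConst_bin => //.
+ by apply: h1 hx _ => h; apply: hn; apply/inList_cat; left.
+ by apply: h2 hx _ => h; apply: hn; apply/inList_cat; right.
Qed.

Lemma top_un (u : K -> K) a f c : u 0 = 0 -> top a f c -> top a (fun s => u (f s)) (u c).
Proof.
move=> h0 [hz1 hn1]; split; first by move=> hz; rewrite hz1.
move=> hz; have [H1 h1] := hn1 hz; exists H1 => x b hx hn; apply: isConst_un => //; exact: h1.
Qed.

Lemma top_ext a f g c : top a f c -> (forall s, f s = g s) -> top a g c.
Proof. by move=> h e; have -> : g = f by apply: functional_extensionality => s; rewrite e. Qed.

Definition V a (g : fn) : K := pick (top a g).

Lemma V_eq a g c : top a g c -> V a g = c.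
Proof. move=> h; apply: (top_uniq (pick_spec (ex_intro _ c h)) h). Qed.

Lemma V_top a g : inB a g -> top a g (V a g).
Proof. move=> h; apply: pick_spec; exact: top_ex. Qed.

Lemma V_bin (op : K -> K -> K) a f g : op 0 0 = 0 -> inB a f -> inB a g ->
  V a (fun s => op (f s) (g s)) = op (V a f) (V a g).
Proof. move=> h0 hf hg; apply: V_eq; apply: top_bin => //; exact: V_top. Qed.

Lemma V_un (u : K -> K) a f : u 0 = 0 -> inB a f -> V a (fun s => u (f s)) = u (V a f).
Proof. move=> h0 hf; apply: V_eq; apply: top_un => //; exact: V_top. Qed.

Lemma V_one a : V a (one a) = 1.
Proof. apply: V_eq; apply: isConst_top; exact: isConst_one. Qed.

Lemma V_const a c g : isConst a c g -> V a g = c.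
Proof. move=> h; apply: V_eq; exact: isConst_top. Qed.


Lemma V_zero a : V a (fun _ => 0) = 0.
Proof. by apply: V_const => s; split. Qed.

Lemma inB_pre a s b : lev a s b -> inB a (fun t => ind K (pre s t /\ valid a t)).
Proof.
elim: s a => [|x s IH] a.
  move=> _; apply: (inB_ext (inB_one a)) => t; rewrite /one; apply: ind_iff.
  by split => [h|[]//]; split => //; apply: pre_nil.
move/(lev_cat _ [:: x] s) => [b1 [h1 h2]].
have hz : ~ is_zero lt a by move=> hz; move: (lev_zero_nil hz h1).
apply: (@inB_nz_intro _ _ 0 [:: x] hz); split.
- by rewrite ind_F // => -[[w]].
- move=> y t hn; rewrite ind_F // => -[_ /valid_cons [b' [h _]]]; apply: hn; by exists b'.
- move=> y b' hy; case: (classic (y = x)) => [e|ne].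
    subst y; rewrite (lev1_det hy h1); apply: (inB_ext (IH _ h2)) => t; apply: ind_iff.
    by rewrite pre_cons (valid_child t h1); split; [case=> ? ?; split|case=> [[_ ?] ?]].
  apply: (inB_ext (inB_0 b')) => t; rewrite ind_F // => -[/pre_cons [e _] _].
  by apply: ne; rewrite e.
- move=> y b' hy hn t; rewrite ind_F; last by move=> [/pre_cons [e _] _]; apply: hn; left.
  by split.
Qed.

Lemma top_pre a x s b : lev a (x :: s) b -> top a (fun t => ind K (pre (x :: s) t /\ valid a t)) 0.
Proof.
move=> h; have hz : ~ is_zero lt a by move=> hz; move: (lev_zero_nil hz h).
split => // _; exists [:: x] => y b' hy hn t.
rewrite ind_F; last by move=> [/pre_cons [e _] _]; apply: hn; left.
by split.
Qed.

Variables (alpha : T) (n : nat).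
Notation Y := ('I_n * seq label)%type.
Notation fY := (Y -> K).

Definition A (f : fY) := Bn lt alpha f.

Lemma A_bin (op : K -> K -> K) f g : op 0 0 = 0 -> A f -> A g -> A (fun y => op (f y) (g y)).
Proof. by move=> h0 hf hg i; apply: (inB_bin (op := op)). Qed.
Lemma A_un (u : K -> K) f : u 0 = 0 -> A f -> A (fun y => u (f y)).
Proof. by move=> h0 hf i; apply: (inB_un (u := u)). Qed.

Definition ONE : fY := fun y => one alpha y.2.
Lemma A_ONE : A ONE. Proof. move=> i; exact: inB_one. Qed.
Lemma A_0 : A (fun _ => 0). Proof. move=> i; exact: inB_0. Qed.
Lemma A_add f g : A f -> A g -> A (fun y => f y + g y). Proof. by apply: (A_bin (op := fun a b => a + b)); rewrite addr0. Qed.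
Lemma A_sub f g : A f -> A g -> A (fun y => f y - g y). Proof. by apply: (A_bin (op := fun a b => a - b)); rewrite subr0. Qed.
Lemma A_mul f g : A f -> A g -> A (fun y => f y * g y). Proof. by apply: (A_bin (op := fun a b => a * b)); rewrite mulr0. Qed.
Lemma A_scale k f : A f -> A (fun y => k * f y). Proof. by apply: (A_un (u := fun a => k * a)); rewrite mulr0. Qed.
Lemma A_ext f g : A f -> (forall y, f y = g y) -> A g.
Proof. by move=> h e; have -> : g = f by apply: functional_extensionality => s; rewrite e. Qed.

Lemma A_support f y : A f -> ~ valid alpha y.2 -> f y = 0.
Proof. by case: y => i t hf /= hv; apply: (inB_support (hf i)). Qed.

Definition Vn (f : fY) (i : 'I_n) s b := V b (fun t => f (i, s ++ t)).

Lemma Vn_bin (op : K -> K -> K) f g i s b : op 0 0 = 0 -> A f -> A g -> lev alpha s b ->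
  Vn (fun y => op (f y) (g y)) i s b = op (Vn f i s b) (Vn g i s b).
Proof.
move=> h0 hf hg hs; rewrite /Vn; apply: (V_bin (op := op)) => //.
- exact: (inB_restrict (hf i) hs).
- exact: (inB_restrict (hg i) hs).
Qed.
Lemma Vn_un (u : K -> K) f i s b : u 0 = 0 -> A f -> lev alpha s b ->
  Vn (fun y => u (f y)) i s b = u (Vn f i s b).
Proof.
move=> h0 hf hs; rewrite /Vn; apply: (V_un (u := u)) => //; exact: (inB_restrict (hf i) hs).
Qed.
Lemma Vn_add f g i s b : A f -> A g -> lev alpha s b ->
  Vn (fun y => f y + g y) i s b = Vn f i s b + Vn g i s b.
Proof. by apply: (Vn_bin (op := fun a b => a + b)); rewrite addr0. Qed.
Lemma Vn_sub f g i s b : A f -> A g -> lev alpha s b ->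
  Vn (fun y => f y - g y) i s b = Vn f i s b - Vn g i s b.
Proof. by apply: (Vn_bin (op := fun a b => a - b)); rewrite subr0. Qed.
Lemma Vn_mul f g i s b : A f -> A g -> lev alpha s b ->
  Vn (fun y => f y * g y) i s b = Vn f i s b * Vn g i s b.
Proof. by apply: (Vn_bin (op := fun a b => a * b)); rewrite mulr0. Qed.
Lemma Vn_scale k f i s b : A f -> lev alpha s b ->
  Vn (fun y => k * f y) i s b = k * Vn f i s b.
Proof. by apply: (Vn_un (u := fun a => k * a)); rewrite mulr0. Qed.
Lemma Vn_ext f g i s b : (forall y, f y = g y) -> Vn f i s b = Vn g i s b.
Proof. by move=> e; have -> : g = f by apply: functional_extensionality => y; rewrite e. Qed.
Lemma Vn_0 i s b : Vn (fun _ => 0) i s b = 0.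
Proof. exact: V_zero. Qed.

Lemma shift_one s b t : lev alpha s b -> one alpha (s ++ t) = one b t.
Proof.
move=> hs; rewrite /one; apply: ind_iff; rewrite valid_cat; split; last by move=> h; exists b.
by case=> b' [h1 h2]; rewrite (lev_det hs h1).
Qed.

Lemma Vn_ONE i s b : lev alpha s b -> Vn ONE i s b = 1.
Proof.
move=> hs; rewrite /Vn /ONE /=.
have -> : (fun t => one alpha (s ++ t)) = one b by apply: functional_extensionality => t; apply: shift_one.
exact: V_one.
Qed.

Definition chi (i : 'I_n) (s : seq label) : fY :=
  fun y => ind K (y.1 = i /\ pre s y.2 /\ valid alpha y.2).

Lemma A_chi i s b : lev alpha s b -> A (chi i s).
Proof.
move=> hs j; case: (classic (j = i)) => [<-|ne].
  apply: (inB_ext (inB_pre hs)) => t; rewrite /chi /=; apply: ind_iff; tauto.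
apply: (inB_ext (inB_0 alpha)) => t; rewrite /chi ind_F //=; by case.
Qed.

Lemma Vn_chi i s b j u b' : lev alpha s b -> lev alpha u b' ->
  Vn (chi i s) j u b' = ind K (j = i /\ pre s u).
Proof.
move=> hs hu; rewrite /Vn /chi /=.
case: (classic (j = i /\ pre s u)) => [[e hp]|hn].
  rewrite (ind_T _ (conj e hp)); subst j.
  rewrite (_ : (fun t => _) = one b'); first exact: V_one.
  apply: functional_extensionality => t; rewrite -(shift_one t hu) /one; apply: ind_iff.
  split; first by case=> _ [].
  move=> h; split => //; split => //; apply: pre_trans hp _; exact: pre_catr.
rewrite (ind_F _ hn).
case: (classic (j = i)) => [e|ne]; last first.
  rewrite (_ : (fun t => _) = (fun _ => 0)) ?V_zero //.
  by apply: functional_extensionality => t; rewrite ind_F // => -[].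
subst j; case: (classic (pre u s)) => hus; last first.
  rewrite (_ : (fun t => _) = (fun _ => 0)) ?V_zero //.
  apply: functional_extensionality => t; rewrite ind_F // => -[_ [h _]].
  by case: (pre_comp h (pre_catr u t)) => // h'; apply: hn.
case: hus => w ew; subst s.
case: w hn hs => [|x w] hn hs.
  by case: hn; split => //; rewrite cats0; apply: pre_refl.
move/lev_cat: hs => [b1 [h1 h2]]; rewrite (lev_det hu h1) in h2 *.
rewrite (_ : (fun t => _) = (fun t => ind K (pre (x :: w) t /\ valid b1 t))).
  exact: V_eq (top_pre h2).
apply: functional_extensionality => t; apply: ind_iff; rewrite pre_cat valid_cat.
split; first by case=> _ [hp [b2 [h3 h4]]]; split => //; rewrite (lev_det h1 h3).
by case=> hp hv; split => //; split => //; exists b1.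
Qed.

Definition downcl (D : T -> Prop) := forall x y, lt x y -> D y -> D x.

Definition ID (D : T -> Prop) (f : fY) :=
  A f /\ forall i s b, lev alpha s b -> ~ D b -> Vn f i s b = 0.

Lemma ID_A D f : ID D f -> A f. Proof. by case. Qed.

Lemma ID_bin (op : K -> K -> K) D f g : op 0 0 = 0 -> ID D f -> ID D g -> ID D (fun y => op (f y) (g y)).
Proof.
move=> h0 [hf vf] [hg vg]; split; first exact: A_bin.
by move=> i s b hs hD; rewrite Vn_bin // vf // vg.
Qed.
Lemma ID_add D f g : ID D f -> ID D g -> ID D (fun y => f y + g y).
Proof. by apply: (ID_bin (op := fun a b => a + b)); rewrite addr0. Qed.
Lemma ID_sub D f g : ID D f -> ID D g -> ID D (fun y => f y - g y).
Proof. by apply: (ID_bin (op := fun a b => a - b)); rewrite subr0. Qed.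
Lemma ID_mulA D r f : A r -> ID D f -> ID D (fun y => r y * f y).
Proof.
move=> hr [hf vf]; split; first exact: A_mul.
by move=> i s b hs hD; rewrite Vn_mul // vf // mulr0.
Qed.
Lemma ID_scale D k f : ID D f -> ID D (fun y => k * f y).
Proof.
move=> [hf vf]; split; first exact: A_scale.
by move=> i s b hs hD; rewrite Vn_scale // vf // mulr0.
Qed.
Lemma ID_0 D : ID D (fun _ => 0).
Proof. split; first exact: A_0. by move=> *; rewrite Vn_0. Qed.
Lemma ID_ext D f g : ID D f -> (forall y, f y = g y) -> ID D g.
Proof. by move=> h e; have -> : g = f by apply: functional_extensionality => s; rewrite e. Qed.
Lemma ID_mono (D D' : T -> Prop) f : (forall x, D x -> D' x) -> ID D f -> ID D' f.
Proof. move=> h [hf vf]; split => // i s b hs hD; apply: vf => // /h; exact: hD. Qed.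

Lemma downcl_le D x y : downcl D -> le x y -> D y -> D x.
Proof. by move=> hD [h|->] //; apply: hD. Qed.

Lemma ID_chi D i s b : downcl D -> lev alpha s b -> D b -> ID D (chi i s).
Proof.
move=> hD hs hb; split; first exact: A_chi hs.
move=> j u b' hu hb'; rewrite (Vn_chi i j hs hu) ind_F // => -[_ [w ew]]; subst u.
move/lev_cat: hu => [b1 [h1 h2]]; rewrite -(lev_det hs h1) in h2.
by apply: hb'; apply: downcl_le hD (lev_le h2) hb.
Qed.

Lemma ID_empty f : ID (fun _ => False) f -> forall y, f y = 0.
Proof.
move=> [hf vf] [j t]; case: (classic (valid alpha t)) => hv; last exact: A_support.
move/valid_lev: hv => [z [hz zz]].
have h := vf j t z hz id; rewrite /Vn in h.
have [h1 _] := V_top (inB_restrict (hf j) hz).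
by rewrite -(cats0 t) (h1 zz) h.
Qed.

Inductive spanP (B : fY -> Prop) : fY -> Prop :=
| sp0 : spanP B (fun _ => 0)
| spS c g f : B g -> spanP B f -> spanP B (fun y => c * g y + f y).

Lemma spanP_ext B f g : spanP B f -> (forall y, f y = g y) -> spanP B g.
Proof. by move=> h e; have -> : g = f by apply: functional_extensionality => s; rewrite e. Qed.

Lemma spanP_add B f g : spanP B f -> spanP B g -> spanP B (fun y => f y + g y).
Proof.
elim=> [|c h f' hh _ IH] hg; first by apply: (spanP_ext hg) => y; rewrite add0r.
apply: (spanP_ext (spS c hh (IH hg))) => y; by rewrite addrA.
Qed.

Lemma spanP_scale B k f : spanP B f -> spanP B (fun y => k * f y).
Proof.
elim=> [|c h f' hh _ IH]; first by apply: (spanP_ext (sp0 B)) => y; rewrite mulr0.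
apply: (spanP_ext (spS (k * c) hh IH)) => y; by rewrite mulrDr mulrA.
Qed.

Lemma spanP_gen B g : B g -> spanP B g.
Proof. move=> h; apply: (spanP_ext (spS 1 h (sp0 B))) => y; by rewrite mul1r addr0. Qed.

Lemma spanP_mono (B C : fY -> Prop) f : (forall g, B g -> spanP C g) -> spanP B f -> spanP C f.
Proof.
move=> h; elim=> [|c g f' hg _ IH]; first exact: sp0.
apply: spanP_add => //; exact: spanP_scale (h _ hg).
Qed.

Lemma spanP_sum B m (F : 'I_m -> fY) : (forall i, spanP B (F i)) ->
  spanP B (fun y => \sum_(i < m) F i y).
Proof.
elim: m F => [|m IH] F hF.
  by apply: (spanP_ext (sp0 B)) => y; rewrite big_ord0.
apply: (spanP_ext (spanP_add (IH (fun i => F (widen_ord (leqnSn m) i)) (fun i => hF _)) (hF ord_max))).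
by move=> y; rewrite big_ord_recr.
Qed.

Lemma spanP_close (B : fY -> Prop) (P : fY -> Prop) f :
  P (fun _ => 0) -> (forall c g h, B g -> P h -> P (fun y => c * g y + h y)) ->
  spanP B f -> P f.
Proof. by move=> h0 hS; elim=> // c g f' hg _ IH; apply: hS. Qed.

Lemma ID_span D (B : fY -> Prop) f : (forall g, B g -> ID D g) -> spanP B f -> ID D f.
Proof.
move=> h; apply: spanP_close; first exact: ID_0.
move=> c g f' hg hf'; apply: ID_add => //; apply: ID_scale; exact: h.
Qed.

Lemma spanP_spans (B : fY -> Prop) f : spanP B f ->
  exists (m : nat) (v : 'I_m -> fY) (c : 'I_m -> K),
    (forall i, B (v i)) /\ (forall t, f t = \sum_(i < m) c i * v i t).
Proof.
elim=> [|c g f' hg _ [m [v [cc [hv hs]]]]].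
  exists 0%N, (fun _ => fun _ => 0), (fun _ => 0); split; first by case.
  by move=> t; rewrite big_ord0.
exists m.+1, (fun i => if unlift ord0 i is Some j then v j else g),
  (fun i => if unlift ord0 i is Some j then cc j else c); split.
  by move=> i; case: (unlift ord0 i).
by move=> t; rewrite big_ord_recl /= unlift_none hs; congr (_ + _); apply: eq_bigr => i _; rewrite liftK.
Qed.

Definition Sub (D : T -> Prop) (h : fY) := exists i s b, [/\ lev alpha s b, D b & h = chi i s].

Definition E (i : 'I_n) (s0 : seq label) (g : fn) : fY :=
  fun y => ind K (y.1 = i /\ pre s0 y.2) * g (drop (size s0) y.2).

Definition loc (x : label) (h : fn) : fn := fun t => ind K (pre [:: x] t) * h (behead t).

Lemma E_zero i s0 : E i s0 (fun _ => 0) = (fun _ => 0).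
Proof. by apply: functional_extensionality => y; rewrite /E mulr0. Qed.

Lemma drop_cat_size (s w : seq label) : drop (size s) (s ++ w) = w.
Proof. by rewrite drop_size_cat. Qed.

Lemma drop_cat_sizeS (s w : seq label) : drop (size s).+1 (s ++ w) = behead w.
Proof. elim: s => [|y s IH] /=; first by case: w => [|z w] //=; rewrite drop0. exact: IH. Qed.

Lemma E_chi i s0 a : lev alpha s0 a -> forall y, E i s0 (one a) y = chi i s0 y.
Proof.
move=> hs [j t]; rewrite /E /chi /=.
case: (classic (j = i /\ pre s0 t)) => [[e [w ew]]|hn].
  subst t; rewrite (ind_T _ (conj e (pre_catr s0 w))) drop_cat_size mul1r -(shift_one w hs).
  by apply: ind_iff; rewrite /one; split; [move=> h; split=> //; split=> //; exact: pre_catr|case=> _ []].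
rewrite ind_F // mul0r ind_F //; by case=> e [hp _]; apply: hn.
Qed.

Lemma span_peel D i s0 a c : downcl D -> lev alpha s0 a -> ~ is_zero lt a -> (c = 0 \/ D a) ->
  forall H g, g [::] = 0 ->
  (forall x t, ~ (exists b, lev a [:: x] b) -> g (x :: t) = 0) ->
  (forall x b, lev a [:: x] b -> ~ inList x H -> isConst b c (fun t => g (x :: t))) ->
  (forall x b, lev a [:: x] b -> inList x H ->
     spanP (Sub D) (E i (rcons s0 x) (fun t => g (x :: t) - c * one b t))) ->
  spanP (Sub D) (E i s0 g).
Proof.
move=> hD hs0 hz hc; elim=> [|x H IH] g g0 gout gc gsp.
  have e : forall y, c * chi i s0 y + 0 = E i s0 g y.
    move=> [j t]; rewrite addr0 -(E_chi i hs0) /E /=.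
    case: (classic (j = i /\ pre s0 t)) => [[e [w ew]]|hn]; last by rewrite !ind_F // !mul0r mulr0.
    subst t; rewrite !(ind_T _ (conj e (pre_catr s0 w))) !mul1r drop_cat_size.
    case: w => [|x w]; first by rewrite g0 /one ind_F ?mulr0 // => /valid_nil.
    case: (classic (exists b, lev a [:: x] b)) => [[b hb]|hn]; last first.
      rewrite gout // /one ind_F ?mulr0 // => /valid_cons [b [hb _]]; apply: hn; by exists b.
    have [h1 h2] := gc _ _ hb id w; rewrite /one.
    case: (classic (valid b w)) => hv.
      by rewrite h1 // ind_T ?mulr1 //; apply/(valid_child w hb).
    by rewrite h2 // ind_F ?mulr0 // => /(valid_child w hb).
  case: hc => [c0|hDa].
    subst c; apply: (spanP_ext (sp0 _)) => y; by rewrite -e mul0r addr0.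
  apply: (spanP_ext (spS c _ (sp0 _))) e; exists i, s0, a; split => //.
case: (classic (exists b, lev a [:: x] b)) => [[bx hx]|hnx]; last first.
  apply: IH => //.
  - move=> y b hy hn; apply: (gc _ _ hy) => -[e|h']; last exact: hn h'.
    subst y; apply: hnx; by exists b.
  - move=> y b hy hin; exact: (gsp _ _ hy (or_intror hin)).
pose h := fun t => g (x :: t) - c * one bx t.
pose g' := fun t => g t - loc x h t.
have hg'x : forall t, g' (x :: t) = c * one bx t.
  move=> t; rewrite /g' /loc ind_T /=; last by exists t.
  by rewrite mul1r /h opprB addrC subrK.
have hg'y : forall y t, y <> x -> g' (y :: t) = g (y :: t).
  move=> y t ne; rewrite /g' /loc ind_F ?mul0r ?subr0 // => /pre_cons [e _]; by apply: ne.
have sp' : spanP (Sub D) (E i s0 g').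
  apply: IH.
  - by rewrite /g' /loc ind_F ?mul0r ?subr0 // => -[w].
  - move=> y t hn; have ne : y <> x by move=> e; subst y; apply: hn; exists bx.
    by rewrite hg'y // gout.
  - move=> y b hy hn; case: (classic (y = x)) => [e|ne].
      subst y; rewrite (lev1_det hy hx).
      have hc1 := isConst_un (u := fun a => c * a) (mulr0 c) (isConst_one bx).
      rewrite /= mulr1 in hc1; apply: (isConst_ext hc1).
      by move=> t; rewrite hg'x.
    apply: (isConst_ext (gc _ _ hy _)); last by move=> t /=; rewrite hg'y.
    by case=> [e|h']; [apply: ne; rewrite e|exact: hn h'].
  - move=> y b hy hin; case: (classic (y = x)) => [e|ne].
      subst y; rewrite (lev1_det hy hx); rewrite (_ : (fun t => _) = (fun _ => 0)) ?E_zero; first exact: sp0.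
      by apply: functional_extensionality => t; rewrite hg'x subrr.
    rewrite (_ : (fun t => g' (y :: t) - _) = (fun t => g (y :: t) - c * one b t)).
      exact: (gsp _ _ hy (or_intror hin)).
    by apply: functional_extensionality => t; rewrite hg'y.
have sp2 := gsp _ _ hx (or_introl (erefl x)).
apply: (spanP_ext (spanP_add sp' sp2)) => [[j t]]; rewrite /E /=.
case: (classic (j = i /\ pre s0 t)) => [[e [w ew]]|hn]; last first.
  rewrite !ind_F ?mul0r ?addr0 //; first by case=> e hp; apply: hn; split => //; apply: (pre_trans _ hp); rewrite -cats1; exact: pre_catr.
subst t; rewrite !(ind_T _ (conj e (pre_catr s0 w))) !mul1r drop_cat_size size_rcons drop_cat_sizeS.
have -> : ind K (j = i /\ pre (rcons s0 x) (s0 ++ w)) = ind K (pre [:: x] w).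
  by apply: ind_iff; rewrite -cats1 pre_cat; tauto.
by rewrite /g' /loc /h subrK.
Qed.

Lemma shift_one_gen a s b t : lev a s b -> one a (s ++ t) = one b t.
Proof.
move=> hs; rewrite /one; apply: ind_iff; rewrite valid_cat; split; last by move=> h; exists b.
by case=> b' [h1 h2]; rewrite (lev_det hs h1).
Qed.

Lemma span_tree D i : downcl D -> forall a g, inB a g -> forall s0, lev alpha s0 a ->
  (forall s b, lev a s b -> ~ D b -> V b (fun t => g (s ++ t)) = 0) ->
  spanP (Sub D) (E i s0 g).
Proof.
move=> hD a; elim: a / (wo_wf wo) => a _ IH g hg s0 hs0 hv.
case: (classic (is_zero lt a)) => hz.
  have e : forall y, g [::] * chi i s0 y + 0 = E i s0 g y.
    move=> [j t]; rewrite addr0 /E /chi /=.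
    case: (classic (j = i /\ pre s0 t)) => [[e [w ew]]|hn]; last first.
      have hn' : ~ (j = i /\ pre s0 t /\ valid alpha t) by case=> e [hp _]; apply: hn.
      by rewrite (ind_F _ hn) (ind_F _ hn') mulr0 mul0r.
    subst t; rewrite (ind_T _ (conj e (pre_catr s0 w))) mul1r drop_cat_size.
    case: w => [|x w].
      rewrite ind_T ?mulr1 //; split => //; split; first exact: pre_catr.
      by rewrite cats0; apply/valid_lev; exists a; split.
    rewrite (inB_zero_inv hg hz (s := x :: w)) // ind_F ?mulr0 // => -[_ [_ /valid_cat [b [h1 h2]]]].
    rewrite -(lev_det hs0 h1) in h2; move/valid_lev: h2 => [z [h3 _]].
    by move: (lev_zero_nil hz h3).
  case: (classic (g [::] = 0)) => hg0.
    by apply: (spanP_ext (sp0 _)) => y; rewrite -e hg0 mul0r addr0.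
  have hDa : D a.
    apply: NNPP => hn; apply: hg0; rewrite -(hv [::] a (lev_nil a) hn).
    by apply: esym; apply: V_eq; split.
  apply: (spanP_ext (spS _ _ (sp0 _))) e; exists i, s0, a; split => //.
have [c [H [g0 gout gch gc]]] := inB_nz_inv hg hz.
have hc : c = 0 \/ D a.
  case: (classic (D a)) => hDa; [by right|left].
  rewrite -(hv [::] a (lev_nil a) hDa); apply: esym; apply: V_eq; split => // _; by exists H.
apply: (span_peel hD hs0 hz hc g0 gout gc) => x b hx _.
have hb := lev_lt hx.
apply: (IH b hb).
- apply: (inB_bin (op := fun a b => a - b) (f := fun t => g (x :: t)) (g := fun t => c * one b t)).
  + by rewrite subr0.
  + exact: gch hx.
  + by apply: (inB_un (u := fun a => c * a)); [rewrite mulr0|exact: inB_one].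
- by rewrite -cats1; apply/lev_cat; exists a.
- move=> s b' hs hb'.
  have hs' : lev a (x :: s) b' by apply/(lev_cat _ [:: x] s); exists b.
  rewrite (V_bin (op := fun a b => a - b)) ?subr0 //; last first.
  + by apply: (inB_un (u := fun a => c * a)); [rewrite mulr0|apply: (inB_restrict (inB_one b) hs)].
  + exact: (inB_restrict (gch _ _ hx) hs).
  rewrite (V_un (u := fun a => c * a)) ?mulr0 //; last exact: (inB_restrict (inB_one b) hs).
  rewrite (_ : (fun t => one b (s ++ t)) = one b'); last first.
    by apply: functional_extensionality => t; apply: shift_one_gen.
  rewrite V_one mulr1 (hv _ _ hs' hb') sub0r.
  case: hc => [->|hDa]; first by rewrite oppr0.
  case: hb'; apply: downcl_le hD _ (downcl_le hD (or_introl hb) hDa); exact: lev_le hs.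
Qed.

Lemma span_ID D f : downcl D -> ID D f -> spanP (Sub D) f.
Proof.
move=> hD [hf vf].
have e : forall y, \sum_(i < n) E i [::] (fun t => f (i, t)) y = f y.
  move=> [j t]; rewrite (bigD1 j) //= big1 ?addr0.
    by rewrite /E /= ind_T ?mul1r ?drop0 //; split => //; exact: pre_nil.
  move=> i hij; rewrite /E /= ind_F ?mul0r // => -[e _]; subst j.
  by move: hij; rewrite eqxx.
apply: (spanP_ext (spanP_sum (fun i => span_tree i hD (hf i) (lev_nil alpha) _))) e.
move=> s b hs hb; exact: vf.
Qed.

Lemma ID_of_span D f : downcl D -> spanP (Sub D) f -> ID D f.
Proof.
move=> hD; apply: ID_span => g [i [s [b [hs hb ->]]]]; exact: ID_chi hD hs hb.
Qed.

Lemma ONE_mul w y : A w -> ONE y * w y = w y.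
Proof.
move=> hw; rewrite /ONE /one; case: (classic (valid alpha y.2)) => hv.
  by rewrite ind_T ?mul1r.
by rewrite (A_support hw hv) mulr0.
Qed.

Lemma ideal_ID D : ideal A (ID D).
Proof.
split.
- by move=> x [].
- exact: ID_0.
- by move=> x y; apply: ID_sub.
- by move=> r x; apply: ID_mulA.
Qed.

Lemma ideal_add (J : fY -> Prop) x y : ideal A J -> J x -> J y -> J (fun t => x t + y t).
Proof.
move=> [_ h0 hs _] hx hy.
have h := hs _ _ hx (hs _ _ h0 hy).
by rewrite (_ : (fun t => _) = (fun t => x t - (0 - y t))) //; apply: functional_extensionality => t; rewrite sub0r opprK.
Qed.

Lemma ideal_ext (J : fY -> Prop) x y : J x -> (forall t, x t = y t) -> J y.
Proof. by move=> h e; have -> : y = x by apply: functional_extensionality => s; rewrite e. Qed.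

Lemma ideal_scale (J : fY -> Prop) k x : ideal A J -> J x -> J (fun t => k * x t).
Proof.
move=> hJ hx; have [hA _ _ hm] := hJ.
apply: (ideal_ext (hm _ _ (A_scale k A_ONE) hx)) => t.
by rewrite -mulrA ONE_mul //; apply: hA.
Qed.

Definition Gen D (h : fY) : fY -> Prop :=
  fun z => exists s r, [/\ ID D s, A r & forall y, z y = s y + r y * h y].

Lemma Gen_ideal D h : A h -> ideal A (Gen D h).
Proof.
move=> hh; split.
- move=> z [s [r [hs hr e]]]; apply: (A_ext _ (fun y => esym (e y))).
  apply: A_add; [exact: ID_A hs|exact: A_mul].
- exists (fun _ => 0), (fun _ => 0); split; [exact: ID_0|exact: A_0|by move=> y; rewrite mul0r addr0].
- move=> x z [s [r [hs hr e]]] [s' [r' [hs' hr' e']]].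
  exists (fun y => s y - s' y), (fun y => r y - r' y); split.
  + exact: ID_sub.
  + exact: A_sub.
  + move=> y; rewrite e e' mulrBl; rewrite opprD addrACA. by [].
- move=> q z hq [s [r [hs hr e]]].
  exists (fun y => q y * s y), (fun y => q y * r y); split.
  + exact: ID_mulA.
  + exact: A_mul.
  + by move=> y; rewrite e mulrDr mulrA.
Qed.

Lemma Gen_sub D h x : ID D x -> Gen D h x.
Proof.
move=> hx; exists x, (fun _ => 0); split => //; first exact: A_0.
by move=> y; rewrite mul0r addr0.
Qed.

Lemma Gen_h D h : A h -> Gen D h h.
Proof.
move=> hh; exists (fun _ => 0), ONE; split; [exact: ID_0|exact: A_ONE|].
by move=> y; rewrite add0r ONE_mul.
Qed.

Lemma Gen_le D h (J : fY -> Prop) : ideal A J -> (forall x, ID D x -> J x) -> J h ->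
  forall z, Gen D h z -> J z.
Proof.
move=> hJ hDJ hh z [s [r [hs hr e]]].
apply: (ideal_ext _ (fun y => esym (e y))); apply: ideal_add => //; first exact: hDJ.
have [_ _ _ hm] := hJ; exact: hm.
Qed.

Lemma ideal_A (J : fY -> Prop) x : ideal A J -> J x -> A x.
Proof. by case=> h _ _ _; apply: h. Qed.

Lemma Vn_lin3 s r h j u b : A s -> A r -> A h -> lev alpha u b ->
  Vn (fun y => s y + r y * h y) j u b = Vn s j u b + Vn r j u b * Vn h j u b.
Proof.
move=> hs hr hh hu; rewrite Vn_add //; last exact: A_mul.
by rewrite Vn_mul.
Qed.

Lemma not_ID D g : A g -> ~ ID D g -> exists j u b, [/\ lev alpha u b, ~ D b & Vn g j u b != 0].
Proof.
move=> hg hn; apply: NNPP => hc; apply: hn; split => // j u b hu hb.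
apply: NNPP => hv; apply: hc; exists j, u, b; split => //; exact/eqP.
Qed.

Lemma pre_same_level D s a0 u b : downcl D -> (forall c, lt c a0 -> D c) -> ~ D b ->
  lev alpha s a0 -> lev alpha u b -> pre s u -> u = s /\ b = a0.
Proof.
move=> hD hbelow hb hs hu [w ew]; subst u.
move/lev_cat: hu => [b1 [h1 h2]]; rewrite -(lev_det hs h1) in h2.
case: w h2 => [|x w] h2.
  by rewrite cats0 (lev_nil_inv h2).
by case: hb; apply: hbelow; apply: lev_lt h2.
Qed.

Lemma minimal_chi D i s a0 : downcl D -> ~ D a0 -> (forall c, lt c a0 -> D c) ->
  lev alpha s a0 -> minimal_over A (ID D) (Gen D (chi i s)).
Proof.
move=> hD hna hbelow hs; have hA := A_chi i hs.
have hVchi : Vn (chi i s) i s a0 = 1 by rewrite (Vn_chi i i hs hs) ind_T //; split => //; exact: pre_refl.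
split.
- exact: Gen_ideal.
- by move=> x; apply: Gen_sub.
- exists (chi i s); split; first exact: Gen_h.
  by case=> _ h; move: (h i s a0 hs hna); rewrite hVchi; apply/eqP; apply: oner_neq0.
move=> J' hJ' hDJ' hJ'G.
case: (classic (forall x, J' x -> ID D x)) => [h|h]; [by left|right].
have [g [hg hng]] : exists g, J' g /\ ~ ID D g.
  apply: NNPP => hc; apply: h => x hx; apply: NNPP => hn; apply: hc; by exists x.
have hgA := ideal_A hJ' hg.
have [s' [r [hs' hr eg]]] := hJ'G _ hg.
have [j [u [b [hu hb hvg]]]] := not_ID hgA hng.
have hs'A := ID_A hs'.
have hVg : Vn g j u b = Vn s' j u b + Vn r j u b * Vn (chi i s) j u b.
  rewrite (Vn_ext j u b eg); exact: Vn_lin3.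
rewrite (proj2 hs' j u b hu hb) add0r (Vn_chi i j hs hu) in hVg.
case: (classic (j = i /\ pre s u)) => [[ej hp]|hn]; last first.
  by move: hvg; rewrite hVg ind_F ?mulr0 ?eqxx.
subst j; have [eu eb] := pre_same_level hD hbelow hb hs hu hp; subst u b.
rewrite ind_T ?mulr1 in hVg; last by split => //; exact: pre_refl.
set d := Vn r i s a0 in hVg; have hd : d != 0 by rewrite -hVg.
have [_ _ hJs hJm] := hJ'.
have hrc : J' (fun y => r y * chi i s y).
  have h1 := hJm _ _ hA hg.
  have h2 := hDJ' _ (ID_mulA hA hs').
  apply: (ideal_ext (hJs _ _ h1 h2)) => y.
  rewrite eg mulrDr addrC addKr mulrCA /chi ind_idem; by [].
have hq : ID D (fun y => chi i s y - d^-1 * (r y * chi i s y)).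
  split.
    apply: A_sub => //; apply: A_scale; exact: A_mul.
  move=> j' u' b' hu' hb'.
  rewrite Vn_sub //; last by apply: A_scale; apply: A_mul.
  rewrite Vn_scale //; last exact: A_mul.
  rewrite Vn_mul // (Vn_chi i j' hs hu').
  case: (classic (j' = i /\ pre s u')) => [[ej hp']|hn']; last by rewrite ind_F ?mulr0 ?subrr.
  subst j'; have [eu eb] := pre_same_level hD hbelow hb' hs hu' hp'; subst u' b'.
  by rewrite ind_T ?mulr1 -/d ?mulVf ?subrr //; split => //; exact: pre_refl.
have hchi : J' (chi i s).
  apply: (ideal_ext (ideal_add hJ' (hDJ' _ hq) (ideal_scale (d^-1) hJ' hrc))) => y.
  by rewrite subrK.
exact: Gen_le hJ' hDJ' hchi.
Qed.

Definition nextD (D : T -> Prop) : T -> Prop := fun b => D b \/ (forall c, lt c b -> D c).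

Lemma downcl_next D : downcl D -> downcl (nextD D).
Proof. move=> hD x y hxy [h|h]; [left; exact: hD hxy h|left; exact: h]. Qed.

Lemma child_above b b' (H : seq label) : lt b' b ->
  exists x b1, [/\ lev b [:: x] b1, ~ inList x H & le b' b1].
Proof.
move=> hb'; case: (classify lt b) => [hz|[[p hp]|hl]]; first by case: (hz _ hb').
- exists (inr (natsum H).+1), p; split; first by apply: lev_succ hp _; constructor.
    by move/natsum_ge; rewrite ltnn.
  by case: hp => _ /(_ _ hb') [h|->]; [left|right].
- have [b1 [h1 [h2 h3]]] := limit_avoid wo (lbls H) hl hb'.
  exists (inl b1), b1; split => //; first by apply: lev_lim hl h2 _; constructor.
  by move/lbls_in.
Qed.

Lemma minimal_in_next D (J : fY -> Prop) y : downcl D -> minimal_over A (ID D) J -> J y ->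
  ID (nextD D) y.
Proof.
move=> hD [hJ hDJ _ hmin] hy; have hyA := ideal_A hJ hy.
apply: NNPP => hn.
have [i [u [b [hu hb hv]]]] := not_ID hyA hn.
have hbD : ~ D b by move=> h; apply: hb; left.
have [b' [hb'b hb'D]] : exists b', lt b' b /\ ~ D b'.
  apply: NNPP => hc; apply: hb; right => c hc'; apply: NNPP => hnc; apply: hc; by exists c.
have hbz : ~ is_zero lt b by move=> hz; exact: hz _ hb'b.
set c := Vn y i u b in hv.
have [_ htop] := V_top (inB_restrict (hyA i) hu).
have [H hH] := htop hbz.
have [x [b1 [hx hxH hle]]] := child_above H hb'b.
have hb1D : ~ D b1 by move=> h; apply: hb'D; exact: downcl_le hD hle h.
have hconst := hH _ _ hx hxH.
have hux : lev alpha (rcons u x) b1 by rewrite -cats1; apply/lev_cat; exists b.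
set e := chi i (rcons u x).
have heA : A e := A_chi i hux.
have heyA : A (fun z => e z * y z) := A_mul heA hyA.
have hVy1 : Vn y i (rcons u x) b1 = c.
  rewrite /Vn; apply: V_const; apply: (isConst_ext hconst) => t /=.
  by rewrite cat_rcons.
have hVe1 : Vn e i (rcons u x) b1 = 1.
  by rewrite /e (Vn_chi i i hux hux) ind_T //; split => //; exact: pre_refl.
have hVe0 : Vn e i u b = 0.
  rewrite /e (Vn_chi i i hux hu) ind_F // => -[_ /pre_size]; by rewrite size_rcons ltnn.
have hJ' : ideal A (Gen D (fun z => e z * y z)) := Gen_ideal D heyA.
have hsub : forall z, Gen D (fun z => e z * y z) z -> J z.
  apply: Gen_le => //; have [_ _ _ hm] := hJ; exact: hm.
case: (hmin _ hJ' (fun x => @Gen_sub D _ x) hsub) => [h|h].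
  have [_ h0] := h _ (Gen_h D heyA).
  move: (h0 i (rcons u x) b1 hux hb1D); rewrite Vn_mul // hVe1 hVy1 mul1r => hc0.
  by move: hv; rewrite hc0 eqxx.
have [s [r [hs hr ey]]] := h _ hy.
move: hv; rewrite /c (Vn_ext i u b ey) Vn_lin3 //; last exact: ID_A hs.
by rewrite (proj2 hs i u b hu hbD) Vn_mul // hVe0 mul0r mulr0 addr0 eqxx.
Qed.

Lemma A_sum m (F : 'I_m -> fY) : (forall k, A (F k)) -> A (fun y => \sum_(k < m) F k y).
Proof.
elim: m F => [|m IH] F hF.
  by apply: (A_ext A_0) => y; rewrite big_ord0.
apply: (A_ext (A_add (IH (fun k => F (widen_ord (leqnSn m) k)) (fun k => hF _)) (hF ord_max))).
by move=> y; rewrite big_ord_recr.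
Qed.

Lemma Vn_sum m (F : 'I_m -> fY) i u b : (forall k, A (F k)) -> lev alpha u b ->
  Vn (fun y => \sum_(k < m) F k y) i u b = \sum_(k < m) Vn (F k) i u b.
Proof.
elim: m F => [|m IH] F hF hu.
  by rewrite big_ord0 (Vn_ext i u b (g := fun _ => 0)) ?Vn_0 // => y; rewrite big_ord0.
rewrite big_ord_recr /= -(IH (fun k => F (widen_ord (leqnSn m) k))) // -Vn_add //; last first.
  exact: A_sum.
by apply: Vn_ext => y; rewrite big_ord_recr.
Qed.

Lemma soc_to_next D x : downcl D -> soc_next A (ID D) x -> ID (nextD D) x.
Proof.
move=> hD [hx [m [J [y [s [hs hJ ex]]]]]]; split => // i u b hu hb.
have hyA : forall k, A (y k).
  by move=> k; have [[hJk _ _ _] hyk] := hJ k; exact: ideal_A hJk hyk.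
rewrite (Vn_ext i u b ex) Vn_add //; last exact: A_sum.
  rewrite Vn_sum // big1 ?addr0.
    by apply: (proj2 hs) => // h; apply: hb; left.
  move=> k _; have h := minimal_in_next hD (proj1 (hJ k)) (proj2 (hJ k)).
  exact: (proj2 h).
exact: ID_A hs.
Qed.

Lemma soc_ID D x : ID D x -> soc_next A (ID D) x.
Proof.
move=> hx; split; first exact: ID_A hx.
exists 0%N, (fun _ => fun _ => False), (fun _ => fun _ => 0), x; split => //; first by case.
by move=> t; rewrite big_ord0 addr0.
Qed.

Lemma soc_add D x1 x2 : soc_next A (ID D) x1 -> soc_next A (ID D) x2 ->
  soc_next A (ID D) (fun t => x1 t + x2 t).
Proof.
move=> [hx1 [m1 [J1 [y1 [s1 [hs1 hJ1 e1]]]]]] [hx2 [m2 [J2 [y2 [s2 [hs2 hJ2 e2]]]]]].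
split; first exact: A_add.
exists (m1 + m2)%N, (fun k => match split k with inl k1 => J1 k1 | inr k2 => J2 k2 end),
  (fun k => match split k with inl k1 => y1 k1 | inr k2 => y2 k2 end),
  (fun t => s1 t + s2 t); split.
- exact: ID_add.
- by move=> k; case: (split k).
- move=> t; rewrite e1 e2 big_split_ord /=.
  have -> : \sum_(k < m1) (match split (lshift m2 k) with inl k1 => y1 k1 | inr k2 => y2 k2 end) t
            = \sum_(k < m1) y1 k t.
    by apply: eq_bigr => k _; have := unsplitK (inl k : 'I_m1 + 'I_m2); rewrite /= => ->.
  have -> : \sum_(k < m2) (match split (rshift m1 k) with inl k1 => y1 k1 | inr k2 => y2 k2 end) t
            = \sum_(k < m2) y2 k t.
    by apply: eq_bigr => k _; have := unsplitK (inr k : 'I_m1 + 'I_m2); rewrite /= => ->.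
  by rewrite addrACA.
Qed.

Lemma soc_gen D k i s b : downcl D -> lev alpha s b -> nextD D b ->
  soc_next A (ID D) (fun y => k * chi i s y).
Proof.
move=> hD hs [hb|hb].
  apply: soc_ID; apply: ID_scale; exact: ID_chi hD hs hb.
case: (classic (D b)) => hbD.
  apply: soc_ID; apply: ID_scale; exact: ID_chi hD hs hbD.
have hA := A_chi i hs.
split; first exact: A_scale.
exists 1%N, (fun _ => Gen D (chi i s)), (fun _ => fun y => k * chi i s y), (fun _ => 0); split.
- exact: ID_0.
- move=> _; split; first exact: minimal_chi hD hbD hb hs.
  exists (fun _ => 0), (fun y => k * ONE y); split; [exact: ID_0|exact: A_scale A_ONE|].
  by move=> y; rewrite add0r -mulrA ONE_mul.
- by move=> t; rewrite big_ord1 add0r.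
Qed.

Lemma socle_step D x : downcl D -> (soc_next A (ID D) x <-> ID (nextD D) x).
Proof.
move=> hD; split; first exact: soc_to_next.
move=> hx; have := span_ID (downcl_next hD) hx.
apply: spanP_close.
  exact: soc_ID (ID_0 D).
move=> c g h [i [s [b [hs hb ->]]]] hh; apply: soc_add => //; exact: soc_gen hD hs hb.
Qed.

Lemma span_max D x : spanP (Sub D) x ->
  (forall y, x y = 0) \/ exists M, D M /\ spanP (Sub (fun b => le b M)) x.
Proof.
elim=> [|c g h [i [s [b [hs hb ->]]]] _ [h0|[M [hM hsp]]]]; first by left.
  right; exists b; split => //.
  apply: (spanP_ext (spS c _ (sp0 _))) => [|y]; last by rewrite h0.
  by exists i, s, b; split => //; right.
right; case: (leX_total wo b M) => hbM.
  have hg : Sub (fun b0 => le b0 M) (chi i s) by exists i, s, b.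
  by exists M; split => //; exact: (spS c hg hsp).
have hg : Sub (fun b0 => le b0 b) (chi i s) by exists i, s, b; split => //; right.
exists b; split => //; apply: (spS c hg).
apply: spanP_mono hsp => g' [i' [s' [b' [hs' hb' ->]]]]; apply: spanP_gen.
by exists i', s', b'; split => //; exact (le_tr wo hb' hbM).
Qed.

Lemma socle_char (W : Type) (ltW : W -> W -> Prop) (S : W -> fY -> Prop) :
  is_wellorder ltW -> socle_seq A ltW S ->
  forall w, exists D, downcl D /\ forall x, S w x <-> ID D x.
Proof.
move=> hW hS w; elim: w / (wo_wf hW) => w _ IH.
case: (classify ltW w) => [hz|[[p hp]|hl]].
- exists (fun _ => False); split => // x.
  have [h _ _] := hS w x; rewrite (h hz); split.
    by move=> h0; apply: (ID_ext (ID_0 _)) => y; rewrite h0.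
  exact: ID_empty.
- have [Dp [hDp ep]] := IH p (proj1 hp).
  exists (nextD Dp); split; first exact: downcl_next.
  move=> x; have [_ h _] := hS w x; rewrite (h p hp).
  have -> : S p = ID Dp.
    apply: functional_extensionality => z; apply: propositional_extensionality; exact: ep.
  exact: socle_step.
- pose D := fun a => exists v, ltW v w /\ exists Dv, [/\ downcl Dv, (forall x, S v x <-> ID Dv x) & Dv a].
  have hD : downcl D.
    move=> a1 a2 h12 [v [hv [Dv [h1 h2 h3]]]]; exists v; split => //; exists Dv; split => //.
    exact: h1 h12 h3.
  exists D; split => // x; have [_ _ h] := hS w x; rewrite (h hl); split.
    move=> [v [hv hx]]; have [Dv [h1 h2]] := IH v hv.
    apply: (ID_mono _ (proj1 (h2 x) hx)) => a ha; exists v; split => //; by exists Dv.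
  move=> hx; case: (span_max (span_ID hD hx)) => [h0|[M [[v [hv [Dv [h1 h2 h3]]]] hsp]]].
    have [v hv] := nonzero_ex (proj1 hl); have [Dv [h1 h2]] := IH v hv.
    exists v; split => //; apply/h2; apply: (ID_ext (ID_0 _)) => y; by rewrite h0.
  exists v; split => //; apply/h2; apply: (ID_of_span h1).
  apply: spanP_mono hsp => g [i [s [b [hs hb ->]]]]; apply: spanP_gen.
  exists i, s, b; split => //; exact: downcl_le h1 hb h3.
Qed.

Hypothesis n_pos : (0 < n)%N.
Definition i0 : 'I_n := Ordinal n_pos.
Definition s0 : seq label := proj1_sig (constructive_indefinite_description _ (valid_ex alpha)).
Lemma s0_valid : valid alpha s0.
Proof. exact: proj2_sig (constructive_indefinite_description _ (valid_ex alpha)). Qed.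
Definition p0 : Y := (i0, s0).

Definition Pin (i : 'I_n) (s : seq label) (y : Y) := y.1 = i /\ pre s y.2 /\ valid alpha y.2.
Definition gB (i : 'I_n) (s : seq label) : fY := fun y => ind K (Pin i s y \/ y = p0).
Definition G (h : fY) := exists i s b, lev alpha s b /\ h = gB i s.

Lemma Pin_p0 y : Pin i0 s0 y <-> y = p0.
Proof.
case: y => j t; rewrite /Pin /p0 /=; split.
  by case=> -> [hp hv]; rewrite (valid_pre s0_valid hv hp).
by case=> -> ->; split => //; split; [exact: pre_refl|exact: s0_valid].
Qed.

Lemma chi_Pin i s y : chi i s y = ind K (Pin i s y). Proof. by []. Qed.

Lemma gB_chi i s y : gB i s y = chi i s y + ind K (~ Pin i s p0) * chi i0 s0 y.
Proof.
rewrite /gB !chi_Pin (ind_iff _ (Pin_p0 y)).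
case: (classic (y = p0)) => [e|ne].
  subst y; rewrite (ind_T _ (or_intror (erefl p0))) (ind_T _ (erefl p0)) mulr1.
  case: (classic (Pin i s p0)) => h.
    by rewrite (ind_T _ h) (ind_F _ (fun h' : ~ Pin i s p0 => h' h)) addr0.
  by rewrite (ind_F _ h) (ind_T _ h) add0r.
rewrite (ind_F _ ne) mulr0 addr0; apply: ind_iff; tauto.
Qed.

Lemma gB_p0 : forall y, gB i0 s0 y = chi i0 s0 y.
Proof.
move=> y; rewrite gB_chi ind_F ?mul0r ?addr0 //; apply; by apply/Pin_p0.
Qed.

Lemma lev_s0 : exists z, lev alpha s0 z /\ is_zero lt z.
Proof. by apply/valid_lev; exact: s0_valid. Qed.

Lemma A_gB i s b : lev alpha s b -> A (gB i s).
Proof.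
move=> hs; have [z [hz _]] := lev_s0.
apply: (A_ext _ (fun y => esym (gB_chi i s y))).
apply: A_add; first exact: A_chi hs.
apply: A_scale; exact: A_chi hz.
Qed.

Lemma ID_gB D i s b : downcl D -> lev alpha s b -> D b -> ID D (gB i s).
Proof.
move=> hD hs hb; have [z [hz zz]] := lev_s0.
apply: (ID_ext _ (fun y => esym (gB_chi i s y))).
apply: ID_add; first exact: (ID_chi i hD hs hb).
apply: ID_scale; apply: (ID_chi i0 hD hz).
apply: (downcl_le hD _ hb); exact: (not_lt_le wo (zz b)).
Qed.

Lemma span_G D x : downcl D -> ID D x -> spanP (fun h => G h /\ ID D h) x.
Proof.
move=> hD hx.
case: (classic (exists b, D b)) => [[b0 hb0]|hne]; last first.
  have h0 := ID_empty (ID_mono (fun b hb => hne (ex_intro _ b hb)) hx).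
  by apply: (spanP_ext (sp0 _)) => y; rewrite h0.
have [z [hz zz]] := lev_s0.
have hDz : D z by apply: (downcl_le hD _ hb0); exact: (not_lt_le wo (zz b0)).
apply: spanP_mono (span_ID hD hx) => g [i [s [b [hs hb ->]]]].
have e : forall y, gB i s y + (- ind K (~ Pin i s p0)) * gB i0 s0 y = chi i s y.
  by move=> y; rewrite gB_p0 gB_chi mulNr addrK.
apply: (spanP_ext _ e); apply: spanP_add.
  apply: spanP_gen; split; [by exists i, s, b|exact: ID_gB hD hs hb].
apply: spanP_scale; apply: spanP_gen; split; [by exists i0, s0, z|exact: ID_gB hD hz hDz].
Qed.

Lemma G_strong : strong_mult G.
Proof.
move=> g g' [i [s [b [hs ->]]]] [j [u [b' [hu ->]]]].
have hprod : forall P Q R : Prop, ind K (P \/ R) * ind K (Q \/ R) = ind K ((P /\ Q) \/ R).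
  by move=> P Q R; rewrite -ind_and; apply: ind_iff; tauto.
case: (classic (i = j /\ pre s u)) => [[e hp]|h1].
  exists j, u, b'; split => //; apply: functional_extensionality => y.
  rewrite /gB hprod; apply: ind_iff; rewrite /Pin; subst j.
  split; last by case=> [[e [hp' hv]]|->]; [left; split; split => //; split => //; exact: pre_trans hp hp'|right].
  by case=> [[[e [hp1 hv]] h2]|->]; [left|right].
case: (classic (i = j /\ pre u s)) => [[e hp]|h2].
  exists i, s, b; split => //; apply: functional_extensionality => y.
  rewrite /gB hprod; apply: ind_iff; rewrite /Pin; subst j.
  split; last by case=> [[e [hp' hv]]|->]; [left; split; split => //; split => //; exact: pre_trans hp hp'|right].
  by case=> [[h1' _]|->]; [left|right].
have [z [hz _]] := lev_s0.
exists i0, s0, z; split => //; apply: functional_extensionality => y.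
rewrite /gB hprod; apply: ind_iff; rewrite (Pin_p0 y); split; last by case=> ->; right.
case=> [[[e1 [hp1 hv1]] [e2 [hp2 hv2]]]|->]; last by left.
exfalso; case: (pre_comp hp1 hp2) => h.
  by apply: h1; split => //; rewrite -e1 -e2.
by apply: h2; split => //; rewrite -e1 -e2.
Qed.

Lemma cat_inj_l (A0 : Type) (sg w w' : seq A0) : sg ++ w = sg ++ w' -> w = w'.
Proof. elim: sg => [//|x sg IH] /= [e]; exact: IH. Qed.

Lemma rem_list (sg : seq label) (P : seq (seq label)) :
  exists L, forall q, inList q P -> forall w, q = sg ++ w -> inList w L.
Proof.
elim: P => [|q P [L hL]]; first by exists [::].
case: (classic (exists w, q = sg ++ w)) => [[w ew]|hn].
  exists (w :: L) => q' /= [<-|hq] w' e'.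
    by left; subst q; exact: (cat_inj_l e').
  right; exact: hL hq _ e'.
exists L => q' /= [<-|hq] w' e'; first by case: hn; exists w'.
exact: hL hq _ e'.
Qed.

Lemma inList_map_enum (k : nat) (B : Type) (f : 'I_k -> B) j : inList (f j) (map f (enum 'I_k)).
Proof.
have : j \in enum 'I_k by rewrite mem_enum.
elim: (enum 'I_k) => [//|x s IH] /=; rewrite in_cons => /orP [/eqP ->|h]; [by left|right; exact: IH].
Qed.

Lemma G_indep : lin_indep G.
Proof.
move=> k v c hinj hv hsum.
have hnd : forall i, { p : 'I_n * seq label | exists b, lev alpha p.2 b /\ v i = gB p.1 p.2 }.
  move=> i; apply: constructive_indefinite_description.
  have [j [s [b [hs e]]]] := hv i; by exists (j, s), b.
pose nd i := proj1_sig (hnd i).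
have hnd' : forall i, exists b, lev alpha (nd i).2 b /\ v i = gB (nd i).1 (nd i).2.
  move=> i; exact: proj2_sig (hnd i).
have ndinj : forall i j, nd i = nd j -> i = j.
  move=> i j e; apply: hinj; have [_ [_ ->]] := hnd' i; have [_ [_ ->]] := hnd' j; by rewrite e.
have vp0 : forall j, v j p0 = 1.
  by move=> j; have [_ [_ ->]] := hnd' j; rewrite /gB ind_T //; right.
have main : forall i, (forall j, (size (nd j).2 < size (nd i).2)%N -> nd j <> p0 -> c j = 0) ->
    nd i <> p0 -> c i = 0.
  move=> i IH hne.
  case E : (nd i) => [io sg]; rewrite E in hne; rewrite E /= in IH.
  have [b [hsg hvi]] := hnd' i; rewrite E /= in hsg hvi.
  have [L hL] := rem_list sg (s0 :: [seq (nd j).2 | j <- enum 'I_k]).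
  have [t [ht hav]] := avoid_paths b L.
  pose y : Y := (io, sg ++ t).
  have hvy : valid alpha (sg ++ t) by apply/valid_cat; exists b.
  have hyp0 : y <> p0.
    rewrite /y /p0 => -[e1 e2].
    have hin : inList t L by apply: (hL s0); [left|].
    case: (classic (t = [::])) => [et|tne].
      by apply: hne; rewrite /p0 -e1 -e2 et cats0.
    by apply: (hav _ hin tne); apply: pre_refl.
  have := hsum y; rewrite (bigD1 i) //= big1 ?addr0.
    by rewrite hvi /gB ind_T ?mulr1 //; left; split => //; split => //; apply: pre_catr.
  move=> j hji; have [bj [hsj hvj]] := hnd' j; rewrite hvj /gB.
  case: (classic (Pin (nd j).1 (nd j).2 y \/ y = p0)) => [[hP|hy0]|hnP]; last by rewrite ind_F ?mulr0.
    2: by case: hyp0.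
  case: hP => /= ej [hpj _].
  have hsame : (nd j).2 <> sg.
    move=> hsgeq; case/negP: hji; apply/eqP; apply: ndinj; rewrite E.
    by case: (nd j) ej hsgeq => /= a1 a2 -> ->.
  case: (pre_comp hpj (pre_catr sg t)) => hcmp; last first.
    exfalso; apply: hsame; case: hcmp => w ew.
    have hw : inList w L by apply: (hL (nd j).2); [right; exact: inList_map_enum|].
    rewrite ew in hpj; move/pre_cat: hpj => hwt.
    case: (classic (w = [::])) => [ew0|wne]; first by rewrite ew ew0 cats0.
    by case: (hav _ hw wne).
  have hsz : (size (nd j).2 < size sg)%N.
    have := pre_size hcmp; rewrite leq_eqVlt => /orP [/eqP hs|//].
    case: hcmp hs => w ew; rewrite ew size_cat => hs.
    have hw : size w = 0%N by lia.
    by case: hsame; move/eqP/nilP: hw => hw; rewrite ew hw cats0.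
  have hj0 : nd j <> p0.
    move=> hj0; rewrite hj0 /= in hcmp hsame.
    case: hcmp => w ew; have [z [hz zz]] := lev_s0.
    move: hsg; rewrite ew => /lev_cat [b1 [h1 h2]]; rewrite -(lev_det hz h1) in h2.
    by move: (lev_zero_nil zz h2) => hw; case: hsame; rewrite ew hw cats0.
  by rewrite (IH j hsz hj0) mul0r.
have claim : forall d i, (size (nd i).2 <= d)%N -> nd i <> p0 -> c i = 0.
  elim=> [|d IH] i hs hne; apply: main hne => j hj; first by rewrite leqn0 in hs; rewrite (eqP hs) in hj.
  by apply: IH; rewrite -ltnS; apply: leq_trans hj hs.
move=> i; case: (classic (nd i = p0)) => hi; last exact: (claim _ i (leqnn _) hi).
have := hsum p0; rewrite (bigD1 i) //= big1 ?addr0; first by rewrite vp0 mulr1.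
move=> j hji; rewrite (claim _ j (leqnn _)) ?mul0r // => hj.
by case/negP: hji; apply/eqP; apply: ndinj; rewrite hi hj.
Qed.

Lemma lin_indep_mono (B C : fY -> Prop) : (forall h, C h -> B h) -> lin_indep B -> lin_indep C.
Proof. move=> h hB m v c hinj hv; apply: hB => // i; apply: h; exact: hv. Qed.

Lemma main_thm : exists B : fY -> Prop, [/\ is_basis A B, strong_mult B & conormed A B].
Proof.
exists G; split.
- split.
  + by move=> h [i [s [b [hs ->]]]]; exact: A_gB hs.
  + exact: G_indep.
  + move=> x hx.
    have hT : ID (fun _ => True) x by split => // i s b _ [].
    have h1 := span_G (fun x y _ _ => I) hT.
    have h2 : spanP G x := spanP_mono (fun g hg => spanP_gen (proj1 hg)) h1.
    exact: spanP_spans h2.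
- exact: G_strong.
- move=> W ltW hW S hS w.
  have [D [hD eD]] := socle_char hW hS w.
  exists (fun h => G h /\ ID D h); split; first by move=> h [].
  split.
  + by move=> h [_ hh]; apply/eD.
  + by apply: (lin_indep_mono _ G_indep) => h [].
  + move=> x hx; have hx' : ID D x by apply/eD.
    exact: (spanP_spans (span_G hD hx')).
Qed.

End Main.

Theorem lemma6p7 (K : fieldType) (T : Type) (lt : T -> T -> Prop) (alpha : T) (n : nat) :
  is_wellorder lt -> (0 < n)%N ->
  exists B : ('I_n * seq (label T) -> K) -> Prop,
    [/\ is_basis (@Bn T lt K alpha n) B, strong_mult B & conormed (@Bn T lt K alpha n) B].
Proof.
move=> wo hn; exact: (main_thm wo K alpha hn).
Qed.
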